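(* Let $A\subseteq M\preccurlyeq N$ be models of a complete affine theory. Then $\mathrm{dcl}_M(A)=\mathrm{dcl}_N(A)$.
   Context: Affine continuous logic: $L$-structures are complete metric spaces $(M,d)$ with $d\le1$ and Lipschitz interpretations of function symbols and $[0,1]$-valued relation symbols. Affine formulas are built from $1$ and atomic formulas (including $d$) using only $r\cdot\phi$ ($r\in\mathbb R$), $\phi+\psi$, $\inf_x$, $\sup_x$; $M\preccurlyeq N$ means $M\subseteq N$ and every affine formula with parameters from $M$ has the same value in $M$ and $N$. A predicate $P:M\to\mathbb R$ is $A$-definable if it is a uniform limit on $M$ of interpretations of affine formulas with parameters from $A$. An element $a\in M$ is $A$-definable in $M$ if the predicate $x\mapsto d(x,a)$ on $M$ is $A$-definable; $\mathrm{dcl}_M(A)$ is the set of elements of $M$ that are $A$-definable in $M$. *)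

(* Defs.v *)
From HB Require Import structures.
From mathcomp Require Import all_boot all_order all_algebra.
From mathcomp Require Import classical_sets boolp reals Rstruct.
Unset Printing Implicit Defensive.
Import Order.TTheory GRing.Theory Num.Theory.
Local Open Scope ring_scope.
Local Open Scope classical_set_scope.

Notation R := Rdefinitions.R.

Record language := Language {
  fsym : Type;
  farity : fsym -> nat;
  rsym : Type;
  rarity : rsym -> nat }.
Arguments farity {l} _.
Arguments rarity {l} _.

Inductive term (L : language) : Type :=
| TVar : nat -> term L
| TApp : forall f : fsym L, ('I_(farity f) -> term L) -> term L.

Inductive formula (L : language) : Type :=
| FOne : formula L
| FDist : term L -> term L -> formula L
| FRel : forall r : rsym L, ('I_(rarity r) -> term L) -> formula L
| FScale : R -> formula L -> formula L
| FAdd : formula L -> formula L -> formula L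
| FInf : nat -> formula L -> formula L
| FSup : nat -> formula L -> formula L.

Arguments TVar {L}.
Arguments TApp {L}.
Arguments FOne {L}.
Arguments FDist {L}.
Arguments FRel {L}.
Arguments FScale {L}.
Arguments FAdd {L}.
Arguments FInf {L}.
Arguments FSup {L}.

Fixpoint tfree {L : language} (v : nat) (t : term L) : Prop :=
  match t with
  | TVar n => n = v
  | TApp f ts => exists i, tfree v (ts i)
  end.

Fixpoint ffree {L : language} (v : nat) (phi : formula L) : Prop :=
  match phi with
  | FOne => False
  | FDist t1 t2 => tfree v t1 \/ tfree v t2
  | FRel r ts => exists i, tfree v (ts i)
  | FScale _ psi => ffree v psi
  | FAdd psi chi => ffree v psi \/ ffree v chi
  | FInf x psi => v <> x /\ ffree v psi
  | FSup x psi => v <> x /\ ffree v psi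
  end.

Definition sentence {L : language} (phi : formula L) := forall v, ~ ffree v phi.

Definition lipschitz_fun {T : Type} (d : T -> T -> R) {n : nat}
    (g : ('I_n -> T) -> T) :=
  exists K : R, forall x y : 'I_n -> T,
    d (g x) (g y) <= K * \sum_(i < n) d (x i) (y i).

Definition lipschitz_pred {T : Type} (d : T -> T -> R) {n : nat}
    (g : ('I_n -> T) -> R) :=
  exists K : R, forall x y : 'I_n -> T,
    `|g x - g y| <= K * \sum_(i < n) d (x i) (y i).

Definition cauchy_seq {T : Type} (d : T -> T -> R) (u : nat -> T) :=
  forall e : R, 0 < e -> exists N : nat, forall m n : nat,
    (N <= m)%N -> (N <= n)%N -> d (u m) (u n) < e.

Definition converges_to {T : Type} (d : T -> T -> R) (u : nat -> T) (l : T) :=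
  forall e : R, 0 < e -> exists N : nat, forall n : nat,
    (N <= n)%N -> d (u n) l < e.

Record structure (L : language) := Structure {
  carrier :> Type;
  dist : carrier -> carrier -> R;
  fint : forall f : fsym L, ('I_(farity f) -> carrier) -> carrier;
  rint : forall r : rsym L, ('I_(rarity r) -> carrier) -> R;
  carrier_inhabited : inhabited carrier;
  dist_ge0 : forall x y, 0 <= dist x y;
  dist_le1 : forall x y, dist x y <= 1;
  dist_refl : forall x, dist x x = 0;
  dist_sep : forall x y, dist x y = 0 -> x = y;
  dist_sym : forall x y, dist x y = dist y x;
  dist_triangle : forall x y z, dist x z <= dist x y + dist y z;
  dist_complete : forall u : nat -> carrier, cauchy_seq dist u ->
                    exists l, converges_to dist u l;
  fint_lipschitz : forall f, lipschitz_fun dist (@fint f);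
  rint_range : forall r x, 0 <= @rint r x <= 1;
  rint_lipschitz : forall r, lipschitz_pred dist (@rint r) }.
Arguments fint {L} s f _.
Arguments rint {L} s r _.
Arguments dist {L} s _ _.

Definition upd {T : Type} (s : nat -> T) (x : nat) (a : T) : nat -> T :=
  fun v => if v == x then a else s v.

Fixpoint teval {L : language} (M : structure L) (s : nat -> M) (t : term L) : M :=
  match t with
  | TVar n => s n
  | TApp f ts => fint M f (fun i => teval M s (ts i))
  end.

Fixpoint feval {L : language} (M : structure L) (phi : formula L) (s : nat -> M)
    : R :=
  match phi with
  | FOne => 1
  | FDist t1 t2 => dist M (teval M s t1) (teval M s t2)
  | FRel r ts => rint M r (fun i => teval M s (ts i))
  | FScale c psi => c * feval M psi s
  | FAdd psi chi => feval M psi s + feval M chi s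
  | FInf x psi => inf (range (fun a : M => feval M psi (upd s x a)))
  | FSup x psi => sup (range (fun a : M => feval M psi (upd s x a)))
  end.

Definition models {L : language} (M : structure L) (T : set (formula L)) :=
  forall phi, T phi -> forall s : nat -> M, feval M phi s <= 0.

Definition complete_theory {L : language} (T : set (formula L)) :=
  (forall phi, T phi -> sentence phi) /\
  (exists M : structure L, models M T) /\
  (forall (M1 M2 : structure L), models M1 T -> models M2 T ->
     forall phi, sentence phi ->
     forall (s1 : nat -> M1) (s2 : nat -> M2), feval M1 phi s1 = feval M2 phi s2).

(* M ⊆ N, with M identified with its image under the inclusion map [iota]. *)
Definition substructure {L : language} {M N : structure L} (iota : M -> N) :=
  (forall a b : M, dist N (iota a) (iota b) = dist M a b) /\
  (forall f (xs : 'I_(farity f) -> M), iota (fint M f xs) = fint N f (iota \o xs)) /\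
  (forall r (xs : 'I_(rarity r) -> M), rint N r (iota \o xs) = rint M r xs).

Definition elementary_substructure {L : language} {M N : structure L}
    (iota : M -> N) :=
  substructure iota /\
  forall (phi : formula L) (s : nat -> M), feval N phi (iota \o s) = feval M phi s.

(* P : M -> R is A-definable: a uniform limit on M of the predicates
   x |-> phi(x, a) where phi is an affine formula whose free variables other
   than x (= variable 0) are assigned parameters from A. *)
Definition definable_pred {L : language} {M : structure L} (A : set M)
    (P : M -> R) :=
  forall e : R, 0 < e ->
    exists (phi : formula L) (s : nat -> M),
      (forall v, v <> 0%N -> ffree v phi -> A (s v)) /\
      (forall x : M, `|P x - feval M phi (upd s 0%N x)| <= e).

Definition definable_elt {L : language} {M : structure L} (A : set M) (a : M) :=
  definable_pred A (fun x => dist M x a).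

Definition dcl {L : language} {M : structure L} (A : set M) : set M :=
  [set a | definable_elt A a].

(* Main.v *)
Require Import Defs.
From mathcomp Require Import all_boot all_order all_algebra.
From mathcomp Require Import classical_sets boolp reals Rstruct.
From mathcomp Require Import lra.
Import Order.TTheory GRing.Theory Num.Theory.
Local Open Scope ring_scope.
Local Open Scope classical_set_scope.
Fixpoint term_ind' {L : language} (P : term L -> Prop)
  (HV : forall n, P (TVar n))
  (HA : forall f ts, (forall i, P (ts i)) -> P (TApp f ts)) (t : term L) : P t :=
  match t with
  | TVar n => HV n
  | TApp f ts => HA f ts (fun i => term_ind' P HV HA (ts i))
  end.

Lemma teval_ext {L : language} (M : structure L) (s1 s2 : nat -> M) (t : term L) :
  (forall v, tfree v t -> s1 v = s2 v) -> teval M s1 t = teval M s2 t.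
Proof.
elim/(@term_ind' L): t => [n|f ts IH] H /=; first exact: H.
congr (fint M f _); apply/funext => i; apply: IH => v Hv; apply: H; by exists i.
Qed.

Lemma feval_ext {L : language} (M : structure L) (phi : formula L) (s1 s2 : nat -> M) :
  (forall v, ffree v phi -> s1 v = s2 v) -> feval M phi s1 = feval M phi s2.
Proof.
elim: phi s1 s2 => [|t1 t2|r ts|c psi IH|psi IH1 chi IH2|x psi IH|x psi IH] s1 s2 H /=.
- by [].
- by rewrite (teval_ext _ _ s2 t1) ?(teval_ext _ _ s2 t2) // => v Hv; apply: H; [right|left].
- congr (rint M r _); apply/funext => i; apply: teval_ext => v Hv; apply: H; by exists i.
- by rewrite (IH _ s2).
- by rewrite (IH1 _ s2) ?(IH2 _ s2) // => v Hv; apply: H; [right|left].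
- rewrite (_ : (fun a : M => feval M psi (upd s1 x a)) = (fun a => feval M psi (upd s2 x a))) //.
  apply/funext => a; apply: IH => v Hv; rewrite /upd.
  by case: eqP => // hvx; apply: H.
- rewrite (_ : (fun a : M => feval M psi (upd s1 x a)) = (fun a => feval M psi (upd s2 x a))) //.
  apply/funext => a; apply: IH => v Hv; rewrite /upd.
  by case: eqP => // hvx; apply: H.
Qed.

Lemma tfree_fin {L : language} (t : term L) : exists m, forall v, tfree v t -> (v < m)%N.
Proof.
elim/(@term_ind' L): t => [n|f ts IH].
  by exists n.+1 => v /= ->.
have [mf Hmf] := choice IH.
exists (\max_(i < farity f) mf i) => v /= [i Hi].
exact: leq_trans (Hmf i v Hi) (leq_bigmax i).
Qed.

Lemma ffree_fin {L : language} (phi : formula L) : exists m, forall v, ffree v phi -> (v < m)%N.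
Proof.
elim: phi => [|t1 t2|r ts|c psi IH|psi IH1 chi IH2|x psi IH|x psi IH].
- by exists 0%N.
- have [m1 H1] := tfree_fin t1; have [m2 H2] := tfree_fin t2.
  exists (maxn m1 m2) => v /= [/H1|/H2] h; rewrite leq_max h ?orbT //.
- have [mf Hmf] := choice (fun i => tfree_fin (ts i)).
  exists (\max_(i < rarity r) mf i) => v /= [i Hi].
  exact: leq_trans (Hmf i v Hi) (leq_bigmax i).
- exact: IH.
- have [m1 H1] := IH1; have [m2 H2] := IH2.
  exists (maxn m1 m2) => v /= [/H1|/H2] h; rewrite leq_max h ?orbT //.
- have [m Hm] := IH; exists m => v /= [_ /Hm] //.
- have [m Hm] := IH; exists m => v /= [_ /Hm] //.
Qed.

Lemma range_ne {L : language} (M : structure L) (g : M -> R) : range g !=set0.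
Proof. case: (carrier_inhabited _ M) => x; by exists (g x), x. Qed.

Lemma feval_bound {L : language} (M : structure L) (phi : formula L) :
  exists B : R, forall s, `|feval M phi s| <= B.
Proof.
elim: phi => [|t1 t2|r ts|c psi IH|psi IH1 chi IH2|x psi IH|x psi IH].
- by exists 1 => s /=; rewrite normr1.
- exists 1 => s /=; rewrite ger0_norm ?dist_ge0 //; exact: dist_le1.
- exists 1 => s /=; have /andP[h1 h2] := rint_range _ M r (fun i => teval M s (ts i)).
  by rewrite ger0_norm.
- have [B HB] := IH; exists (`|c| * B) => s /=; rewrite normrM ler_wpM2l //.
- have [B1 H1] := IH1; have [B2 H2] := IH2; exists (B1 + B2) => s /=.
  exact: le_trans (ler_normD _ _) (lerD (H1 s) (H2 s)).
- have [B HB] := IH; exists B => s /=.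
  set S := range (fun a : M => feval M psi (upd s x a)).
  have hne : S !=set0 by exact: range_ne.
  have hlb : lbound S (- B).
    move=> _ [a _ <-]; have := HB (upd s x a); rewrite ler_norml => /andP[] //.
  have [_ [a0 _ _]] := hne.
  have h1 := lb_le_inf hne hlb.
  have h2 : inf S <= feval M psi (upd s x a0).
    apply: ge_inf; [by exists (- B)| by exists a0].
  have := HB (upd s x a0); rewrite ler_norml => /andP[_ h3].
  rewrite ler_norml h1 /=; exact: le_trans h2 h3.
- have [B HB] := IH; exists B => s /=.
  set S := range (fun a : M => feval M psi (upd s x a)).
  have hne : S !=set0 by exact: range_ne.
  have hub : ubound S B.
    move=> _ [a _ <-]; have := HB (upd s x a); rewrite ler_norml => /andP[] //.
  have [_ [a0 _ _]] := hne.
  have h1 := ge_sup hne hub.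
  have h2 : feval M psi (upd s x a0) <= sup S.
    apply: ub_le_sup; [by exists B| by exists a0].
  have := HB (upd s x a0); rewrite ler_norml => /andP[h3 _].
  rewrite ler_norml h1 andbT; exact: le_trans h3 h2.
Qed.

Lemma feval_sup_ge {L : language} (M : structure L) x psi s (a : M) :
  feval M psi (upd s x a) <= feval M (FSup x psi) s.
Proof.
have [B HB] := feval_bound M psi; apply: ub_le_sup; last by exists a.
exists B => _ [c _ <-]; have := HB (upd s x c); rewrite ler_norml => /andP[] //.
Qed.

Lemma feval_inf_le {L : language} (M : structure L) x psi s (a : M) :
  feval M (FInf x psi) s <= feval M psi (upd s x a).
Proof.
have [B HB] := feval_bound M psi; apply: ge_inf; last by exists a.
exists (- B) => _ [c _ <-]; have := HB (upd s x c); rewrite ler_norml => /andP[] //.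
Qed.

Lemma upd_same {T} (s : nat -> T) x a : upd s x a x = a.
Proof. by rewrite /upd eqxx. Qed.

Lemma upd_other {T} (s : nat -> T) x a y : y != x -> upd s x a y = s y.
Proof. by rewrite /upd => /negbTE ->. Qed.

Lemma upd_comp {T U} (f : T -> U) (s : nat -> T) x a :
  upd (f \o s) x (f a) = f \o upd s x a.
Proof. by apply/funext => v; rewrite /upd /comp; case: eqP. Qed.

Lemma feval_addE {L : language} (M : structure L) p q s :
  feval M (FAdd p q) s = feval M p s + feval M q s.
Proof. by []. Qed.
Lemma feval_scaleE {L : language} (M : structure L) c p s :
  feval M (FScale c p) s = c * feval M p s.
Proof. by []. Qed.
Lemma feval_distvarE {L : language} (M : structure L) i j s :
  feval M (FDist (TVar i) (TVar j)) s = dist M (s i) (s j).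
Proof. by []. Qed.
Lemma feval_supE {L : language} (M : structure L) x p s :
  feval M (FSup x p) s = sup (range (fun a => feval M p (upd s x a))).
Proof. by []. Qed.

Local Open Scope classical_set_scope.
Theorem mainTheorem11 (L : language) (T : set (formula L))
    (M N : structure L) (iota : M -> N) (A : set M) :
  complete_theory T -> models M T -> models N T ->
  elementary_substructure iota ->
  iota @` dcl A = dcl (iota @` A).
Proof.
move=> _ _ _ [[Hd [Hf Hr]] Hel].
have inj : forall a b, iota a = iota b -> a = b.
  by move=> a b h; apply: (dist_sep _ M); rewrite -Hd h dist_refl.
apply/seteqP; split.
- move=> _ [a Ha <-] e e0.
  have [phi [s [Hfree Happ]]] := Ha e e0.
  have [m Hm] := ffree_fin phi.
  pose k := m.+1.
  have kfree : ~ ffree k phi by move/Hm; rewrite ltnNge leqnSn.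
  have k0 : k != 0%N by [].
  exists phi, (iota \o s); split.
    by move=> v hv hf; exists (s v) => //; apply: Hfree.
  move=> y.
  pose t := upd s k a.
  have HeM : forall x0 : M, feval M phi (upd t 0%N x0) = feval M phi (upd s 0%N x0).
    move=> x0; apply: feval_ext => v hv; rewrite /upd /t /upd.
    case: eqP => // _; case: eqP => // hvk; by rewrite hvk in hv.
  have HeN : feval N phi (upd (iota \o t) 0%N y) = feval N phi (upd (iota \o s) 0%N y).
    apply: feval_ext => v hv; rewrite /upd /t /upd /comp.
    case: eqP => // _; case: eqP => // hvk; by rewrite hvk in hv.
  have tk : upd (iota \o t) 0%N y k = iota a.
    by rewrite upd_other // /comp /t upd_same.
  pose c1 := FSup 0%N (FAdd phi (FScale (-1) (FDist (TVar 0%N) (TVar k)))).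
  pose c2 := FSup 0%N (FAdd (FDist (TVar 0%N) (TVar k)) (FScale (-1) phi)).
  have h1 : feval M c1 t <= e.
    rewrite /c1 /c2 feval_supE; apply: ge_sup; first exact: range_ne.
    move=> _ [x0 _ <-]; rewrite !feval_addE !feval_scaleE feval_distvarE.
    rewrite HeM upd_same upd_other // /t upd_same.
    have := Happ x0; rewrite ler_norml; lra.
  have h2 : feval M c2 t <= e.
    rewrite /c1 /c2 feval_supE; apply: ge_sup; first exact: range_ne.
    move=> _ [x0 _ <-]; rewrite !feval_addE !feval_scaleE feval_distvarE.
    rewrite HeM upd_same upd_other // /t upd_same.
    have := Happ x0; rewrite ler_norml; lra.
  rewrite -Hel in h1; rewrite -Hel in h2.
  have g1 := le_trans (feval_sup_ge _ _ _ _ y) h1.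
  have g2 := le_trans (feval_sup_ge _ _ _ _ y) h2.
  move: g1 g2; rewrite !feval_addE !feval_scaleE feval_distvarE HeN tk upd_same => g1 g2.
  rewrite ler_norml; apply/andP; split; lra.
- move=> b Hb.
  have pull : forall e : R, 0 < e -> exists (psi : formula L) (s' : nat -> M),
      (forall v, v <> 0%N -> ffree v psi -> A (s' v)) /\
      (forall y : N, `|dist N y b - feval N psi (upd (iota \o s') 0%N y)| <= e).
    move=> e e0; have [psi [s [Hfree Happ]]] := Hb e e0.
    case: (carrier_inhabited _ M) => m0.
    have hP : forall v, exists a0 : M, (exists a, iota a = s v) -> iota a0 = s v.
      move=> v.
      case: (pselect (exists a, iota a = s v)) => [[a ha]|hn].
        by exists a.
      by exists m0.
    have [s' Hs'] := choice hP.
    exists psi, s'; split.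
      move=> v hv hf; have [a Aa ha] := Hfree v hv hf.
      have := Hs' v (ex_intro _ a ha); rewrite -ha => /inj -> //.
    move=> y; rewrite -(@feval_ext _ _ _ (upd s 0%N y)) //.
    move=> v hv; rewrite /upd /comp; case: eqP => // hv0.
    have [a Aa ha] := Hfree v hv0 hv; by rewrite Hs' //; exists a.
  have approx : forall e : R, 0 < e -> exists x : M, dist N (iota x) b <= e.
    move=> e e0.
    have e3 : 0 < e / 3 by lra.
    have [psi [s' [_ Happ]]] := pull _ e3.
    have hb := Happ b; rewrite dist_refl in hb.
    have hinf := feval_inf_le N 0%N psi (iota \o s') b.
    rewrite Hel in hinf.
    have : feval M (FInf 0%N psi) s' < 2 * e / 3.
      have := hb; rewrite ler_norml => /andP[hb1 hb2]; lra.
    move/inf_lt => /(_ (range_ne _ _)) [_ [x0 _ <-] hx0].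
    exists x0; have := Happ (iota x0).
    rewrite upd_comp Hel ler_norml => /andP[_ _].
    have := Happ (iota x0); rewrite upd_comp Hel ler_norml => /andP[hh1 hh2].
    have hx1 : feval M psi (upd s' 0%N x0) < 2 * e / 3 := hx0; lra.
  have hP2 : forall n : nat, exists x : M, dist N (iota x) b <= (n.+1%:R : R)^-1.
    by move=> n; apply: approx; rewrite invr_gt0 ltr0Sn.
  have [xs Hxs] := choice hP2.
  have mono : forall K n : nat, (K <= n)%N -> (n.+1%:R : R)^-1 <= (K.+1%:R : R)^-1.
    by move=> K n h; rewrite lef_pV2 ?posrE ?ltr0Sn // ler_nat ltnS.
  have small : forall e : R, 0 < e -> exists K : nat, (K.+1%:R : R)^-1 < e.
    by move=> e e0; have [k hk] := ltr_add_invr e0; exists k; rewrite add0r in hk.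
  have cauchy : cauchy_seq (dist M) xs.
    move=> e e0; have [K hK] : exists K : nat, (K.+1%:R : R)^-1 < e / 2.
      by apply: small; lra.
    exists K => m n hm hn.
    rewrite -Hd.
    have := dist_triangle _ N (iota (xs m)) b (iota (xs n)).
    rewrite (dist_sym _ N b).
    have := Hxs m; have := Hxs n; have := mono _ _ hm; have := mono _ _ hn. move: (K.+1%:R : R)^-1 (n.+1%:R : R)^-1 (m.+1%:R : R)^-1 hK => u v w *; lra.
  have [a Ha] := dist_complete _ M xs cauchy.
  have hab : iota a = b.
    apply: (dist_sep _ N); apply/eqP; rewrite eq_le dist_ge0 andbT.
    case: (lerP (dist N (iota a) b) 0) => // hd.
    have [K1 hK1] : exists K1 : nat, forall n, (K1 <= n)%N -> dist M (xs n) a < dist N (iota a) b / 2.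
      by apply: Ha; lra.
    have [K2 hK2] : exists K : nat, (K.+1%:R : R)^-1 < dist N (iota a) b / 2.
      by apply: small; lra.
    pose n := maxn K1 K2.
    have := hK1 n (leq_maxl _ _); have := Hxs n; have := mono K2 n (leq_maxr _ _).
    have := dist_triangle _ N (iota a) (iota (xs n)) b.
    rewrite Hd (dist_sym _ M a); move: (K2.+1%:R : R)^-1 (n.+1%:R : R)^-1 hK2 => u v *; lra.
  exists a => //.
  move=> e e0; have [psi [s' [Hfr Happ]]] := pull e e0; exists psi, s'; split => // x.
  by have := Happ (iota x); rewrite upd_comp Hel -hab Hd.
Qed.
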